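(* Let $n \geq 3$ and let $k$ be an integer with $0 < k < \frac{n}{2}$. Write points of $\mathbb{R}^n$ as $(x,y)$ with $x \in \mathbb{R}^{n-k}$ and $y \in \mathbb{R}^k$. Let $u$ be a convex function on $\{|x| < 1\} \cap \{|y| < 1\}$ satisfying $\det D^2 u \geq 1$ there, with $u \geq 0$ and $u = 0$ on $\{x = 0\}$. Then there is a constant $c(n) > 0$ such that for all $r < 1$, $$\inf_{|y|<1} \sup_{|x| = r} u(x,y) > c(n)\, r^{2 - \frac{2k}{n}}.$$
   Context: The inequality $\det D^2 u \geq 1$ for a convex function is understood in the weak (Alexandrov/viscosity) sense. *)

(* Defs.v *)
From HB Require Import structures.
From mathcomp Require Import all_boot all_order all_algebra.
From mathcomp Require Import all_classical all_reals all_analysis.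
Set Implicit Arguments. Unset Strict Implicit. Unset Printing Implicit Defensive.
Import Order.TTheory GRing.Theory Num.Theory.
Import numFieldNormedType.Exports.
Local Open Scope classical_set_scope.
Local Open Scope ring_scope.

(* Euclidean norm on R^p (the library norm on 'rV is the max norm). *)
Definition enorm (R : realType) (p : nat) (v : 'rV[R]_p) : R :=
  Num.sqrt (\sum_(i < p) v 0 i ^+ 2).

Definition evec (R : realType) (N : nat) (i : 'I_N) : 'rV[R]_N := delta_mx 0 i.

Definition partial (R : realType) (N : nat) (i : 'I_N)
  (f : 'rV[R]_N -> R) (z : 'rV[R]_N) : R := 'D_(evec R i) f z.

Definition C2 (R : realType) (N : nat) (f : 'rV[R]_N -> R) : Prop :=
  continuous f /\
  (forall i z, derivable f z (evec R i)) /\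
  (forall i, continuous (partial i f)) /\
  (forall i j z, derivable (partial i f) z (evec R j)) /\
  (forall i j, continuous (partial j (partial i f))).

Definition hessian (R : realType) (N : nat) (f : 'rV[R]_N -> R)
  (z : 'rV[R]_N) : 'M[R]_N :=
  \matrix_(i, j) partial i (partial j f) z.

Definition convex_on (R : realType) (N : nat) (D : set 'rV[R]_N)
  (u : 'rV[R]_N -> R) : Prop :=
  forall z1 z2 (t : R), D z1 -> D z2 -> 0 <= t <= 1 ->
    u (t *: z1 + (1 - t) *: z2) <= t * u z1 + (1 - t) * u z2.

(* det D^2 u >= 1 in the viscosity sense on the open set D: for every C^2
   test function phi touching u from above at z0 in D, det D^2 phi(z0) >= 1. *)
Definition MA_ge1_visc (R : realType) (N : nat) (D : set 'rV[R]_N)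
  (u : 'rV[R]_N -> R) : Prop :=
  forall (z0 : 'rV[R]_N) (phi : 'rV[R]_N -> R),
    D z0 -> C2 phi -> phi z0 = u z0 ->
    (exists2 e : R, 0 < e &
       forall z, D z -> enorm (z - z0) < e -> u z <= phi z) ->
    1 <= \det (hessian phi z0).

(* The cylinder {|x| < 1} ∩ {|y| < 1} in R^(m+k), points (x,y) = row_mx x y *)
Definition cyl (R : realType) (m k : nat) : set 'rV[R]_(m + k) :=
  [set z | enorm (lsubmx z) < 1 /\ enorm (rsubmx z) < 1].

(* Main.v *)
Require Import Defs.
From HB Require Import structures.
From mathcomp Require Import all_boot all_order all_algebra.
From mathcomp Require Import all_classical all_reals all_analysis.
From mathcomp Require Import ring lra.
Import Order.TTheory GRing.Theory Num.Theory.
Import numFieldNormedType.Exports.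
Local Open Scope classical_set_scope.
Local Open Scope ring_scope.
Set Implicit Arguments. Unset Strict Implicit. Unset Printing Implicit Defensive.
Section S.
Variable R : realType.
Lemma sum_cont (N : nat) (F : 'I_N -> 'rV[R]_N -> R) :
  (forall i, continuous (F i)) -> continuous (fun z => \sum_(i < N) F i z).
Proof.
move=> Fc.
suff H : forall s : seq 'I_N, continuous (fun z => \sum_(i <- s) F i z) by apply: H.
elim=> [|a s IH].
  under [fun z => _]funext do rewrite big_nil. exact: cst_continuous.
under [fun z => _]funext do rewrite big_cons.
move=> x; apply: continuousD; [exact: Fc | exact: IH].
Qed.
End S.
Section S.
Variable R : realType.
Lemma quad_is_derive (N : nat) (f : 'rV[R]_N -> R) (a v : 'rV[R]_N) (L M : R) :
  (forall h : R, f (h *: v + a) = f a + h * L + h ^+ 2 * M) -> is_derive a v f L.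
Proof.
move=> Hf.
have E : (fun h : R => h^-1 *: ((f \o shift a) (h *: v) - f a)) @ 0^' --> L.
  apply: (@cvg_trans _ ((fun h : R => L + h * M) @ 0^')).
    apply: near_eq_cvg; near=> h.
    have hn0 : h != 0 by near: h; exact: nbhs_dnbhs_neq.
    rewrite /= Hf /shift /=.
    change (L + h * M = h^-1 * (f a + h * L + h ^+ 2 * M - f a)). by field.
  apply: (@cvg_within_filter _ _ _ (nbhs (0:R))).
  have H0 : (fun h : R => L + h * M) @ (nbhs (0:R)) --> L + 0 * M.
    apply: cvgD; first exact: cvg_cst.
    apply: cvgM; [exact: cvg_id | exact: cvg_cst].
  by rewrite mul0r addr0 in H0.
split; [exact: cvgP E | exact: cvg_lim E].
Unshelve. all: by end_near.
Qed.
End S.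
Section S.
Variable R : realType.
Definition Qf (N : nat) (c p z : 'rV[R]_N) : R :=
  \sum_(i < N) c 0 i * (z 0 i - p 0 i) ^+ 2.

Lemma Qf_expand N (c p a v : 'rV[R]_N) (h : R) :
  Qf c p (h *: v + a) = Qf c p a
    + h * (\sum_(i < N) 2 * c 0 i * (a 0 i - p 0 i) * v 0 i)
    + h ^+ 2 * (\sum_(i < N) c 0 i * v 0 i ^+ 2).
Proof.
rewrite /Qf !mulr_sumr -!big_split /=; apply: eq_bigr => i _; rewrite !mxE; ring.
Qed.

Lemma sum_evec N (F : 'I_N -> R) (i : 'I_N) :
  \sum_(j < N) F j * (evec R i) 0 j = F i.
Proof.
rewrite (bigD1 i) //= big1 ?addr0; first by rewrite /evec mxE !eqxx mulr1.
by move=> j /negbTE ji; rewrite /evec mxE ji andbF mulr0.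
Qed.

Lemma evecE N (i j : 'I_N) : (evec R i) 0 j = (j == i)%:R.
Proof. by rewrite /evec mxE eqxx. Qed.

Definition psi N (K d : R) (c p : 'rV[R]_N) (z : 'rV[R]_N) : R := K * Qf c p z + d.

Lemma psi_derive N K d (c p a : 'rV[R]_N) i :
  is_derive a (evec R i) (psi K d c p) (2 * K * c 0 i * (a 0 i - p 0 i)).
Proof.
apply: (quad_is_derive (M := K * \sum_(j < N) c 0 j * (evec R i) 0 j ^+ 2)).
move=> h; rewrite /psi Qf_expand.
have -> : \sum_(j < N) 2 * c 0 j * (a 0 j - p 0 j) * (evec R i) 0 j
          = 2 * c 0 i * (a 0 i - p 0 i) by rewrite sum_evec.
ring.
Qed.

Lemma partial_psi N K d (c p : 'rV[R]_N) i :
  partial i (psi K d c p) = fun z => 2 * K * c 0 i * (z 0 i - p 0 i).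
Proof. by apply/funext => z; rewrite /partial; have [_ ->] := psi_derive K d c p z i. Qed.

Lemma aff_derive N (A : R) (p a : 'rV[R]_N) i j :
  is_derive a (evec R j) (fun z : 'rV[R]_N => A * (z 0 i - p 0 i)) (A * (evec R j) 0 i).
Proof.
apply: (quad_is_derive (M := 0)) => h; rewrite !mxE; ring.
Qed.

Lemma partial2_psi N K d (c p z : 'rV[R]_N) i j :
  partial j (partial i (psi K d c p)) z = 2 * K * c 0 i * (i == j)%:R.
Proof.
by rewrite partial_psi /partial; have [_ ->] := aff_derive (2 * K * c 0 i) p z i j; rewrite evecE.
Qed.

Lemma hessian_psi N K d (c p z : 'rV[R]_N) :
  hessian (psi K d c p) z = diag_mx (\row_i (2 * K * c 0 i)).
Proof.
apply/matrixP => i j; rewrite /hessian !mxE partial2_psi.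
by case: (eqVneq i j) => [->|ij]; rewrite ?mulr1 ?mulr1n ?mulr0 ?mulr0n.
Qed.

Lemma det_hessian_psi N K d (c p z : 'rV[R]_N) :
  \det (hessian (psi K d c p) z) = \prod_(i < N) (2 * K * c 0 i).
Proof. by rewrite hessian_psi det_diag; apply: eq_bigr => i _; rewrite mxE. Qed.

Lemma aff_cont N (A : R) (p : 'rV[R]_N) i :
  continuous (fun z : 'rV[R]_N => A * (z 0 i - p 0 i)).
Proof.
move=> z; apply: (continuousM (s := cst A) (t := fun z : 'rV[R]_N => z 0 i - p 0 i)); first exact: cst_continuous.
apply: continuousB; [exact: coord_continuous | exact: cst_continuous].
Qed.

Lemma Qf_cont N (c p : 'rV[R]_N) : continuous (Qf c p).
Proof.
apply: sum_cont => i.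
have -> : (fun z : 'rV[R]_N => c 0 i * (z 0 i - p 0 i) ^+ 2) =
   (fun z => c 0 i * ((z 0 i - p 0 i) * (z 0 i - p 0 i))).
  by apply/funext => z; rewrite expr2.
move=> z; apply: (continuousM (s := cst (c 0 i)) (t := fun z : 'rV[R]_N => (z 0 i - p 0 i) * (z 0 i - p 0 i))); first exact: cst_continuous.
apply: (continuousM (s := fun z : 'rV[R]_N => (z 0 i - p 0 i)) (t := fun z : 'rV[R]_N => (z 0 i - p 0 i)));
  apply: continuousB; (exact: coord_continuous || exact: cst_continuous).
Qed.

Lemma psi_C2 N K d (c p : 'rV[R]_N) : C2 (psi K d c p).
Proof.
split.
  move=> z; apply: (continuousD (f := fun z => K * Qf c p z) (g := cst d)); last exact: cst_continuous.
  apply: (continuousM (s := cst K) (t := Qf c p)); [exact: cst_continuous | exact: Qf_cont].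
split; first by move=> i z; have [] := psi_derive K d c p z i.
split; first by move=> i; rewrite partial_psi; exact: aff_cont.
split; first by move=> i j z; rewrite partial_psi; have [] := aff_derive (2 * K * c 0 i) p z i j.
move=> i j; rewrite partial_psi.
have -> : partial j (fun z : 'rV[R]_N => 2 * K * c 0 i * (z 0 i - p 0 i)) =
  fun z => 2 * K * c 0 i * (evec R j) 0 i.
  by apply/funext => z; rewrite /partial; have [_ ->] := aff_derive (2 * K * c 0 i) p z i j.
exact: cst_continuous.
Qed.
End S.
Section S2.
Variable R : realType.
Definition sq (p : nat) (v : 'rV[R]_p) : R := \sum_(i < p) v 0 i ^+ 2.

Lemma sq_ge0 p (v : 'rV[R]_p) : 0 <= sq v.
Proof. by apply: sumr_ge0 => i _; exact: sqr_ge0. Qed.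

Lemma enormE p (v : 'rV[R]_p) : enorm v = Num.sqrt (sq v).
Proof. by []. Qed.

Lemma enorm_lt1 p (v : 'rV[R]_p) : (enorm v < 1) = (sq v < 1).
Proof. by rewrite enormE -{1}sqrtr1 ltr_sqrt // ltr01. Qed.

Lemma enorm_eq p (v : 'rV[R]_p) r : 0 <= r -> (enorm v = r) <-> (sq v = r ^+ 2).
Proof.
move=> r0; rewrite enormE; split => [<-|->]; first by rewrite sqr_sqrtr // sq_ge0.
by rewrite sqrtr_sqr ger0_norm.
Qed.

Lemma sq_scale p (a : R) (v : 'rV[R]_p) : sq (a *: v) = a ^+ 2 * sq v.
Proof. by rewrite /sq mulr_sumr; apply: eq_bigr => i _; rewrite mxE exprMn. Qed.

Lemma sq_row p q (x : 'rV[R]_p) (y : 'rV[R]_q) : sq (row_mx x y) = sq x + sq y.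
Proof.
rewrite /sq big_split_ord /=; congr (_ + _); apply: eq_bigr => i _.
  by rewrite row_mxEl.
by rewrite row_mxEr.
Qed.

Lemma sq_split p q (z : 'rV[R]_(p + q)) : sq z = sq (lsubmx z) + sq (rsubmx z).
Proof. by rewrite -sq_row hsubmxK. Qed.

Lemma sq_add_le p (v w : 'rV[R]_p) : sq (v + w) <= 2 * sq v + 2 * sq w.
Proof.
rewrite /sq !mulr_sumr -big_split /=; apply: ler_sum => i _; rewrite mxE.
have := sqr_ge0 (v 0 i - w 0 i); nra.
Qed.

Lemma sq_opp p (v : 'rV[R]_p) : sq (- v) = sq v.
Proof. by rewrite /sq; apply: eq_bigr => i _; rewrite mxE sqrrN. Qed.

Definition cvec (m k : nat) (A B : R) : 'rV[R]_(m + k) :=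
  \row_(i < m + k) (if (i < m)%N then A else B).

Lemma Qf_split m k A B (y1 : 'rV[R]_k) (z : 'rV[R]_(m + k)) :
  Qf (cvec m k A B) (row_mx 0 y1) z = A * sq (lsubmx z) + B * sq (rsubmx z - y1).
Proof.
rewrite /Qf big_split_ord /sq !mulr_sumr; congr (_ + _); apply: eq_bigr => i _.
  by rewrite row_mxEl !mxE /= ltn_ord subr0.
rewrite (row_mxEr (0 : 'rV[R]_m)) !mxE /=. 
by rewrite ltnNge leq_addr.
Qed.
End S2.
Section QfFacts.
Variable R : realType.

Lemma term_le_sum N (F : 'I_N -> R) i : (forall j, 0 <= F j) -> F i <= \sum_(j < N) F j.
Proof.
move=> F0; rewrite (bigD1 i) //= lerDl; apply: sumr_ge0 => j _; exact: F0.
Qed.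

Lemma Qf_ge0 N (c p z : 'rV[R]_N) : (forall i, 0 <= c 0 i) -> 0 <= Qf c p z.
Proof. by move=> c0; apply: sumr_ge0 => i _; apply: mulr_ge0 => //; exact: sqr_ge0. Qed.

Lemma Qf_self N (c p : 'rV[R]_N) : Qf c p p = 0.
Proof. by rewrite /Qf big1 // => i _; rewrite subrr expr0n mulr0. Qed.

Lemma Qf_shift N (c p y : 'rV[R]_N) : Qf c p y = Qf c 0 (y - p).
Proof. by apply: eq_bigr => i _; rewrite !mxE subr0. Qed.

Lemma Qf_add_le N (c p z w : 'rV[R]_N) : (forall i, 0 <= c 0 i) ->
  Qf c p (z + w) <= 2 * Qf c p z + 2 * Qf c 0 w.
Proof.
move=> c0; rewrite /Qf !mulr_sumr -big_split /=; apply: ler_sum => i _; rewrite !mxE subr0.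
have := c0 i; have := sqr_ge0 (z 0 i - p 0 i - w 0 i) ; nra.
Qed.

Lemma Qf_scale N (c w : 'rV[R]_N) t : Qf c 0 (t *: w) = t ^+ 2 * Qf c 0 w.
Proof. by rewrite /Qf mulr_sumr; apply: eq_bigr => i _; rewrite !mxE !subr0; ring. Qed.

Lemma Qf_opp N (c w : 'rV[R]_N) : Qf c 0 (- w) = Qf c 0 w.
Proof. by apply: eq_bigr => i _; rewrite !mxE !subr0 sqrrN. Qed.

Lemma Qf_le_sq N (c w : 'rV[R]_N) C : (forall i, c 0 i <= C) -> Qf c 0 w <= C * sq w.
Proof.
move=> cC; rewrite /Qf /sq mulr_sumr; apply: ler_sum => i _; rewrite mxE subr0.
by apply: ler_wpM2r => //; exact: sqr_ge0.
Qed.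
End QfFacts.
Lemma helpC (R : realType) (C x : R) : 0 <= C -> 0 <= x -> x < (1 / (2 * C + 1)) ^+ 2 -> C * x <= 1 / 4.
Proof.
move=> C0 x0 hx.
have d0 : 0 < 2 * C + 1 by lra.
have : x * (2 * C + 1) ^+ 2 < 1.
  rewrite -ltr_pdivlMr ?exprn_gt0 //. by rewrite expr_div_n expr1n in hx.
nra.
Qed.
Lemma sq_lt_helper (R : realType) (a e : R) : 0 <= a -> a < e -> a ^+ 2 < e ^+ 2.
Proof. move=> ? ?; nra. Qed.
Lemma sqr_lt1 (R : realType) (r : R) : 0 < r -> r < 1 -> r ^+ 2 < 1.
Proof. move=> ? ?; nra. Qed.

Lemma sqr_le_ge0 (R : realType) (a b : R) : 0 <= a -> 0 < b -> a ^+ 2 <= b ^+ 2 -> a <= b.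
Proof. move=> ? ? ?; nra. Qed.

Section Core.
Variable R : realType.
Variables m k : nat.
Hypothesis hm : (0 < m)%N.
Variable u : 'rV[R]_(m + k) -> R.
Hypothesis Hconv : convex_on (@cyl R m k) u.
Hypothesis Hpos : forall z, @cyl R m k z -> 0 <= u z.
Hypothesis Hzero : forall y : 'rV[R]_k, enorm y < 1 -> u (row_mx 0 y) = 0.
Variables (r h : R) (y0 : 'rV[R]_k).
Hypotheses (r0 : 0 < r) (r1 : r < 1) (h0 : 0 < h) (Hy0 : sq y0 < 1).
Hypothesis Hsph : forall x : 'rV[R]_m, sq x = r ^+ 2 -> u (row_mx x y0) <= h.

Lemma cylE (z : 'rV[R]_(m + k)) : cyl z <-> sq (lsubmx z) < 1 /\ sq (rsubmx z) < 1.
Proof. by rewrite /cyl /= !enorm_lt1. Qed.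

Lemma cyl_row (x : 'rV[R]_m) (y : 'rV[R]_k) : sq x < 1 -> sq y < 1 -> cyl (row_mx x y).
Proof. by move=> hx hy; apply/cylE; rewrite row_mxKl row_mxKr. Qed.

Lemma comb_row (t : R) (x1 x2 : 'rV[R]_m) (y1 y2 : 'rV[R]_k) :
  t *: row_mx x1 y1 + (1 - t) *: row_mx x2 y2 =
  row_mx (t *: x1 + (1 - t) *: x2) (t *: y1 + (1 - t) *: y2).
Proof. by rewrite !scale_row_mx add_row_mx. Qed.

Lemma step1a (x1 x2 : 'rV[R]_m) t : sq x1 = r ^+ 2 -> sq x2 = r ^+ 2 -> 0 <= t <= 1 ->
  u (row_mx (t *: x1 + (1 - t) *: x2) y0) <= h.
Proof.
move=> h1 h2 /andP[t0 t1].
have r2 := sqr_lt1 r0 r1.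
have := Hconv (cyl_row (x:=x1) (y:=y0) _ Hy0) (cyl_row (x:=x2) (y:=y0) _ Hy0).
rewrite h1 h2 => /(_ t r2 r2); rewrite t0 t1 => /(_ erefl).
rewrite comb_row -scalerDl [t + (1 - t)]addrC subrK scale1r.
have := Hsph h1; have := Hsph h2; move=> a b c. 
have : t * u (row_mx x1 y0) <= t * h by rewrite ler_wpM2l.
have : (1 - t) * u (row_mx x2 y0) <= (1 - t) * h by rewrite ler_wpM2l // subr_ge0.
lra.
Qed.

Lemma sq_evec (i : 'I_m) : sq (evec R i) = 1.
Proof.
rewrite /sq; under eq_bigr do rewrite expr2.
by rewrite (sum_evec (fun j => evec R i 0 j)) evecE eqxx.
Qed.

Lemma sq0_eq0 p (x : 'rV[R]_p) : sq x = 0 -> x = 0.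
Proof.
move=> /eqP; rewrite psumr_eq0 => [/allP H|i _]; last exact: sqr_ge0.
apply/matrixP => i j; rewrite !mxE ord1.
have := H j (mem_index_enum j); rewrite implyTb sqrf_eq0 => /eqP ->.
by [].
Qed.

Lemma step1 (x : 'rV[R]_m) : sq x <= r ^+ 2 -> u (row_mx x y0) <= h.
Proof.
move=> hx.
have sx0 := sq_ge0 x.
set rho := Num.sqrt (sq x).
have rho0 : 0 <= rho by exact: sqrtr_ge0.
have rho2 : rho ^+ 2 = sq x by rewrite sqr_sqrtr.
have [rz|rpos] := eqVneq rho 0.
  have x0 : x = 0 by apply: sq0_eq0; rewrite -rho2 rz expr0n.
  set e := r *: evec R (Ordinal hm).
  have se : sq e = r ^+ 2 by rewrite /e sq_scale sq_evec mulr1.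
  have se' : sq (- e) = r ^+ 2 by rewrite sq_opp.
  have := step1a se se' (t := 2^-1).
  have -> : 2^-1 *: e + (1 - 2^-1) *: - e = x.
    rewrite x0 scalerN -scaleNr -scalerDl.
    have -> : 2^-1 - (1 - 2^-1) = 0 :> R by field.
    by rewrite scale0r.
  apply; apply/andP; split; [by rewrite invr_ge0 | by rewrite invf_le1 // ler1n].
have rp : 0 < rho by rewrite lt_def rpos rho0.
have rle : rho <= r by apply: sqr_le_ge0 => //; rewrite rho2.
set x1 := (r / rho) *: x.
set x2 := (- (r / rho)) *: x.
have s1 : sq x1 = r ^+ 2 by rewrite /x1 sq_scale -rho2; field; rewrite gt_eqF.
have s2 : sq x2 = r ^+ 2 by rewrite /x2 sq_scale sqrrN -rho2; field; rewrite gt_eqF.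
have := step1a s1 s2 (t := (1 + rho / r) / 2).
have -> : (1 + rho / r) / 2 *: x1 + (1 - (1 + rho / r) / 2) *: x2 = x.
  rewrite /x1 /x2 !scalerA -scalerDl.
  have -> : (1 + rho / r) / 2 * (r / rho) + (1 - (1 + rho / r) / 2) * - (r / rho) = 1.
    by field; rewrite ?gt_eqF.
  by rewrite scale1r.
apply; apply/andP; split.
  by apply: divr_ge0 => //; apply: addr_ge0 => //; apply: divr_ge0 => //; exact: ltW.
rewrite ler_pdivrMr // mul1r.
have : rho / r <= 1 by rewrite ler_pdivrMr // mul1r.
lra.
Qed.

Lemma sq0 p : sq (0 : 'rV[R]_p) = 0.
Proof. by rewrite /sq big1 // => i _; rewrite mxE expr0n. Qed.

Definition y1 := 2^-1 *: y0.

Lemma step2 (z : 'rV[R]_(m + k)) : sq (lsubmx z) <= r ^+ 2 / 4 ->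
  sq (rsubmx z - y1) <= 1 / 16 -> cyl z /\ u z <= h.
Proof.
move=> hx hy.
have r2 := sqr_lt1 r0 r1.
have Ez : z = 2^-1 *: row_mx (2 *: lsubmx z) y0 + (1 - 2^-1) *: row_mx 0 (2 *: (rsubmx z - y1)).
  by rewrite comb_row -{1}(hsubmxK z); congr row_mx; apply/matrixP => i j; rewrite !mxE; field.
have c1 : cyl (row_mx (2 *: lsubmx z) y0).
  apply: cyl_row => //; rewrite sq_scale; lra.
have c2 : cyl (row_mx (0 : 'rV[R]_m) (2 *: (rsubmx z - y1))).
  apply: cyl_row; rewrite ?sq0 ?sq_scale; lra.
have u2 : u (row_mx (0 : 'rV[R]_m) (2 *: (rsubmx z - y1))) = 0.
  by apply: Hzero; rewrite enorm_lt1 sq_scale; lra.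
have u1 : u (row_mx (2 *: lsubmx z) y0) <= h.
  by apply: step1; rewrite sq_scale; lra.
split.
  apply/cylE; split; first lra.
  have := sq_add_le (rsubmx z - y1) y1; rewrite subrK /y1 sq_scale.
  rewrite -/y1 (_ : (2^-1 : R) ^+ 2 = 1 / 4); last by field.
  have := sq_ge0 y0; have := Hy0; lra.
have ht : 0 <= (2^-1 : R) <= 1 by apply/andP; split; [by rewrite invr_ge0 | by rewrite invf_le1 // ler1n].
have := @Hconv _ _ (2^-1) c1 c2 ht.
rewrite -Ez u2 mulr0 addr0 => H; apply: (le_trans H).
have := h0; have : 2^-1 * u (row_mx (2 *: lsubmx z) y0) <= 2^-1 * h by rewrite ler_wpM2l // invr_ge0.
lra.
Qed.

Definition cc := cvec m k (16 / r ^+ 2) 64.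
Definition pp : 'rV[R]_(m + k) := row_mx 0 y1.
Definition Q := Qf cc pp.
Definition Cm : R := 16 / r ^+ 2 + 64.

Lemma r2_gt0 : 0 < r ^+ 2.
Proof. by rewrite exprn_gt0. Qed.

Lemma cc_ge1 i : 1 <= cc 0 i.
Proof.
rewrite /cc /cvec mxE; case: ifP => _; last by rewrite ler1n.
rewrite ler_pdivlMr ?r2_gt0 // mul1r.
have := sqr_lt1 r0 r1; lra.
Qed.

Lemma cc_ge0 i : 0 <= cc 0 i.
Proof. exact: le_trans ler01 (cc_ge1 i). Qed.

Lemma cc_le i : cc 0 i <= Cm.
Proof.
have := r2_gt0 => r2; have A : 0 <= 16 / r ^+ 2 by rewrite divr_ge0 // ltW.
rewrite /cc /cvec /Cm mxE; case: ifP => _; lra.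
Qed.

Lemma QE z : Q z = 16 / r ^+ 2 * sq (lsubmx z) + 64 * sq (rsubmx z - y1).
Proof. by rewrite /Q /cc /pp Qf_split. Qed.

Lemma Q4 z : Q z <= 4 -> cyl z /\ u z <= h.
Proof.
move=> hq; apply: step2.
  have r2 := r2_gt0.
  have A : 16 / r ^+ 2 * sq (lsubmx z) <= 4.
    have := sq_ge0 (rsubmx z - y1); have := sq_ge0 (lsubmx z); move: hq; rewrite QE.
    have : 0 <= 16 / r ^+ 2 * sq (lsubmx z) by rewrite mulr_ge0 ?divr_ge0 ?sq_ge0 // ltW.
    lra.
  have -> : sq (lsubmx z) = (r ^+ 2 / 16) * (16 / r ^+ 2 * sq (lsubmx z)).
    by field; rewrite gt_eqF.
  have : 0 <= r ^+ 2 / 16 by rewrite divr_ge0 // ltW.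
  move: A; move: (16 / r ^+ 2 * sq (lsubmx z)) => a A B. 
  have : r ^+ 2 / 16 * a <= r ^+ 2 / 16 * 4 by rewrite ler_wpM2l.
  lra.
have := sq_ge0 (rsubmx z - y1); move: hq; rewrite QE.
have := r2_gt0 => r2.
have : 0 <= 16 / r ^+ 2 * sq (lsubmx z) by rewrite mulr_ge0 ?divr_ge0 ?sq_ge0 // ltW.
lra.
Qed.

Lemma Q_add z w : Q (z + w) <= 2 * Q z + 2 * Qf cc 0 w.
Proof. exact: Qf_add_le cc_ge0. Qed.

Lemma comb_vec (z w : 'rV[R]_(m + k)) t : z + t *: w = t *: (z + w) + (1 - t) *: z.
Proof. by apply/matrixP => i j; rewrite !mxE; ring. Qed.

Lemma step3a z w t : Q z <= 1 -> Qf cc 0 w <= 1 -> 0 <= t <= 1 ->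
  u (z + t *: w) <= t * h + (1 - t) * u z.
Proof.
move=> hz hw ht.
have [cz _] : cyl z /\ u z <= h by apply: Q4; lra.
have [czw uzw] : cyl (z + w) /\ u (z + w) <= h.
  by apply: Q4; have := Q_add z w; lra.
rewrite comb_vec; apply: (le_trans (Hconv czw cz ht)).
move/andP: ht => [t0 t1].
have : t * u (z + w) <= t * h by rewrite ler_wpM2l.
lra.
Qed.

Lemma step3 z w t : Q z <= 1 -> Qf cc 0 w <= 1 -> 0 <= t <= 1 ->
  `|u (z + t *: w) - u z| <= t * h.
Proof.
move=> hz hw ht.
have A := step3a hz hw ht.
have hw' : Qf cc 0 (- w) <= 1 by rewrite Qf_opp.
have B := step3a hz hw' ht.
have [cz _] : cyl z /\ u z <= h by apply: Q4; lra.
have uz0 := Hpos cz.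
have Qt : Qf cc 0 (t *: w) <= 1.
  rewrite Qf_scale; move/andP: ht => [t0 t1].
  have : t ^+ 2 <= 1 by rewrite expr_le1.
  have := Qf_ge0 0 w cc_ge0; move: hw; move: (Qf cc 0 w) => q hw q0 t2.
  have : t ^+ 2 * q <= 1 * q by rewrite ler_wpM2r.
  lra.
have [c1 _] : cyl (z + t *: w) /\ u (z + t *: w) <= h.
  by apply: Q4; have := Q_add z (t *: w); lra.
have [c2 _] : cyl (z + t *: - w) /\ u (z + t *: - w) <= h.
  by apply: Q4; have := Q_add z (t *: - w); rewrite [t *: - w]scalerN Qf_opp; lra.
have hh : 0 <= (2^-1 : R) <= 1 by apply/andP; split; [by rewrite invr_ge0 | by rewrite invf_le1 // ler1n].
have C := Hconv c1 c2 hh.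
rewrite (_ : 2^-1 *: (z + t *: w) + (1 - 2^-1) *: (z + t *: - w) = z) in C; last first.
  by apply/matrixP => i j; rewrite !mxE; field.
have D := Hpos c2.
move/andP: ht => [t0 t1].
have E : 0 <= t * u z by rewrite mulr_ge0.
rewrite -[z + t *: - w]/(z + t *: - w) scalerN in B C.
rewrite ler_norml; apply/andP; split; lra.
Qed.

Lemma u_cont z : Q z <= 1 -> {for z, continuous u}.
Proof.
move=> hz; apply/(@cvgrPdist_le _ _ _ (nbhs z) (nbhs_filter z)) => e e0.
set t := Num.min (e / h) 1.
have t0 : 0 < t by rewrite lt_min divr_gt0 // ltr01.
have t1 : t <= 1 by rewrite ge_min lexx orbT.
have th : t * h <= e.
  have : t <= e / h by rewrite ge_min lexx.
  by rewrite ler_pdivlMr.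
have Hn : \forall y \near z, `|Qf cc z z - Qf cc z y| < t ^+ 2.
  by move: (@Qf_cont _ _ cc z z) => /cvgrPdist_lt /(_ _ (exprn_gt0 2 t0)).
near=> y.
have Hy : `|Qf cc z z - Qf cc z y| < t ^+ 2 by near: y.
rewrite Qf_self sub0r normrN ger0_norm ?Qf_ge0 // in Hy; last exact: cc_ge0.
set w := t^-1 *: (y - z).
have hw : Qf cc 0 w <= 1.
  rewrite /w Qf_scale -Qf_shift exprVn.
  rewrite -ler_pdivlMl ?invr_gt0 ?exprn_gt0 // invrK mulr1; exact: ltW.
have Ey : z + t *: w = y.
  by rewrite /w scalerA mulfV ?gt_eqF // scale1r addrC subrK.
have := step3 hz hw (t := t); rewrite Ey t1 ltW // => /(_ erefl) H.
by rewrite distrC; apply: le_trans H th.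
Unshelve. all: by end_near.
Qed.

Hypothesis HMA : MA_ge1_visc (@cyl R m k) u.

Lemma core : 1 <= \prod_(i < m + k) (2 * (4 * h) * cc 0 i).
Proof.
set K := [set z | Q z <= 1].
pose f := fun z => u z - psi (4 * h) (- (3 * h)) cc pp z.
have Kp : K pp by rewrite /K /= /Q Qf_self ler01.
have K0 : K !=set0 by exists pp.
have cK : compact K.
  apply: (@subclosed_compact _ K [set v : 'rV[R]_(m + k) | forall i, `[pp ord0 i - 1, pp ord0 i + 1]%classic (v ord0 i)]).
  - have : closed (Q @^-1` [set x | x <= 1]).
      by apply: (continuous_closedP Q).1; [exact: Qf_cont | exact: closed_le].
    by [].
  - by apply: (@rV_compact _ _ (fun i => `[pp ord0 i - 1, pp ord0 i + 1]%classic)) => i; exact: segment_compact.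
  - move=> z; rewrite /K /= => hz i; rewrite /= in_itv /=.
    have A := @term_le_sum _ _ (fun j => cc 0 j * (z 0 j - pp 0 j) ^+ 2) i
      (fun j => mulr_ge0 (cc_ge0 j) (sqr_ge0 _)).
    have B := cc_ge1 i.
    have C : (z 0 i - pp 0 i) ^+ 2 <= 1.
      apply: le_trans hz; apply: le_trans A; rewrite ler_peMl // sqr_ge0 //.
    have D : `|z 0 i - pp 0 i| <= 1.
      by rewrite -(ler_pXn2r (n := 2)) ?nnegrE ?normr_ge0 ?ler01 // real_normK ?num_real // expr1n.
    move: D; rewrite ler_norml => /andP[D1 D2].
    have E0 : (0 : 'I_1) = ord0 by apply/val_inj.
    rewrite E0 in D1 D2; move: D1 D2; move: (z ord0 i) (pp ord0 i) => a b D1 D2.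
    apply/andP; split; lra.
have cf : {within K, continuous f}.
  apply: continuous_in_subspaceT => z; rewrite inE /= => hz.
  apply: continuousB; first exact: u_cont.
  exact: (psi_C2 (4 * h) (- (3 * h)) cc pp).1.
have [z0 Kz0 Hmax] := EVT_max_rV K0 cK cf.
move: Kz0; rewrite inE /= => Kz0. have {}Kz0 : Q z0 <= 1 by [].
have [cz0 uz0] : cyl z0 /\ u z0 <= h by apply: Q4; lra.
have upp : u pp = 0.
  apply: Hzero; rewrite enorm_lt1 /y1 sq_scale.
  have := Hy0; have := sq_ge0 y0.
  rewrite (_ : (2^-1 : R) ^+ 2 = 1 / 4); last by field.
  lra.
have fpp : f pp = 3 * h by rewrite /f /psi /Q upp Qf_self; ring.
have Hf := Hmax pp (mem_set Kp).
have Qz0 : Q z0 <= 1 / 4.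
  move: Hf; rewrite fpp /f /psi -/(Q z0) => Hf.
  have : h * (4 * Q z0) <= h * 1 by have := h0; lra.
  rewrite ler_pM2l //; lra.
set phi := psi (4 * h) (- (3 * h) + f z0) cc pp.
have := HMA cz0 (psi_C2 (4 * h) (- (3 * h) + f z0) cc pp).
rewrite det_hessian_psi; apply.
  by rewrite /f /psi; ring.
have Cm0 : 0 <= Cm.
  by rewrite /Cm; apply: addr_ge0 => //; rewrite divr_ge0 // ltW // r2_gt0.
exists (1 / (2 * Cm + 1)); first by rewrite divr_gt0 //; lra.
move=> z cz hze.
have sz : sq (z - z0) < (1 / (2 * Cm + 1)) ^+ 2.
  rewrite -(@sqr_sqrtr _ (sq (z - z0))) ?sq_ge0 //.
  apply: sq_lt_helper => //; exact: sqrtr_ge0.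
have Qd : Qf cc 0 (z - z0) <= 1 / 4.
  apply: le_trans (Qf_le_sq (z - z0) cc_le) _.
  by apply: helpC => //; exact: sq_ge0.
have Qz : Q z <= 1.
  have := Q_add z0 (z - z0); rewrite addrC subrK; lra.
have := Hmax z (mem_set Qz); rewrite /f /psi -!/(Q _).
lra.
Qed.

Lemma cc_l (i : 'I_m) : cc 0 (lshift k i) = 16 / r ^+ 2.
Proof. by rewrite /cc /cvec mxE /= ltn_ord. Qed.

Lemma cc_r (i : 'I_k) : cc 0 (rshift m i) = 64.
Proof. by rewrite /cc /cvec mxE /= ltnNge leq_addr. Qed.

Lemma core2 : 1 <= (8 * h * (16 / r ^+ 2)) ^+ m * (8 * h * 64) ^+ k.
Proof.
have := core; rewrite big_split_ord.
rewrite (eq_bigr (fun _ => 8 * h * (16 / r ^+ 2))); last first.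
  by move=> i _; rewrite cc_l; ring.
rewrite [\prod_(i < k) _](eq_bigr (fun _ => 8 * h * 64)); last first.
  by move=> i _; rewrite cc_r; ring.
by rewrite !prodr_const !card_ord.
Qed.
End Core.
Lemma final_num (R : realType) (m k : nat) (g X : R) : (0 < m)%N -> 0 < X ->
  g ^+ (m + k) = X ^+ m -> (g / (8 * X)) ^+ m * (g / 2) ^+ k < 1.
Proof.
move=> hm X0 hg.
rewrite !expr_div_n mulf_div -exprD hg exprMn.
have Xm : 0 < X ^+ m by rewrite exprn_gt0.
have -> : X ^+ m / (8 ^+ m * X ^+ m * 2 ^+ k) = 1 / (8 ^+ m * 2 ^+ k).
  by field; rewrite ?gt_eqF ?exprn_gt0 //.
have h8 : 8 <= (8 : R) ^+ m.
  by rewrite -(prednK hm) exprS ler_peMr // exprn_ege1 // ler1n.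
have h2 : 1 <= (2 : R) ^+ k by rewrite exprn_ege1 // ler1n.
rewrite ltr_pdivrMr ?mul1r; last by rewrite mulr_gt0 // exprn_gt0.
have : 8 ^+ m * 1 <= (8 : R) ^+ m * 2 ^+ k by rewrite ler_wpM2l // exprn_ge0.
rewrite mulr1; lra.
Qed.

Unset Implicit Arguments.
Theorem lemma3p2 (R : realType) (n : nat) : (3 <= n)%N ->
  exists2 c : R, 0 < c &
  forall (k : nat), (0 < k)%N -> (k.*2 < n)%N ->
  forall u : 'rV[R]_(n - k + k) -> R,
    convex_on (@cyl R (n - k) k) u ->
    MA_ge1_visc (@cyl R (n - k) k) u ->
    (forall z, @cyl R (n - k) k z -> 0 <= u z) ->
    (forall y : 'rV[R]_k, enorm y < 1 -> u (row_mx 0 y) = 0) ->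
    forall r : R, 0 < r -> r < 1 ->
      ((c * powR r (2 - 2 * k%:R / n%:R))%:E <
       ereal_inf [set ereal_sup [set (u (row_mx x y))%:E |
                                   x in [set x : 'rV[R]_(n - k) | (enorm x = r)%R]]
                 | y in [set y : 'rV[R]_k | (enorm y < 1)%R]])%E.
Proof.
move=> n3; exists (1 / 2048); first by rewrite divr_gt0 ?ltr01 ?ltr0n.
move=> k k0 kn u Hconv HMA Hpos Hzero r r0 r1.
have hm : (0 < n - k)%N by rewrite subn_gt0; apply: leq_ltn_trans kn; rewrite -addnn leq_addl.
set al := 2 - 2 * k%:R / n%:R.
set g := powR r al.
have g0 : 0 < g by rewrite powR_gt0.
set h := g / 1024.
have h0 : 0 < h by rewrite divr_gt0 ?ltr0n.
rewrite ltNge; apply/negP => Hle.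
have : (ereal_inf [set ereal_sup [set (u (row_mx x y))%:E |
                                   x in [set x : 'rV[R]_(n - k) | (enorm x = r)%R]]
                 | y in [set y : 'rV[R]_k | (enorm y < 1)%R]] < h%:E)%E.
  apply: (le_lt_trans Hle); rewrite lte_fin /h; lra.
move/ereal_inf_lt => [_ [y0 Hy0 <-] Hs].
have Hsph : forall x : 'rV[R]_(n - k), sq x = r ^+ 2 -> u (row_mx x y0) <= h.
  move=> x hx; rewrite -lee_fin; apply/ltW/(le_lt_trans _ Hs).
  apply: ereal_sup_ubound; exists x => //; apply/enorm_eq => //; exact: ltW.
have Hy0' : sq y0 < 1 by rewrite -enorm_lt1.
have := core2 hm Hconv Hpos Hzero r0 r1 h0 Hy0' Hsph HMA.
have ng : g ^+ (n - k + k) = (r ^+ 2) ^+ (n - k).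
  rewrite subnK; last by apply: leq_trans (ltnW kn); rewrite -addnn leq_addl.
  rewrite /g -powR_mulrn ?powR_ge0 // -powRrM -exprM -powR_mulrn; last exact: ltW.
  congr (r `^ _); rewrite /al natrM.
  have nn : (n%:R : R) != 0 by rewrite pnatr_eq0 -lt0n (leq_trans _ n3).
  rewrite natrB; last by apply: leq_trans (ltnW kn); rewrite -addnn leq_addl.
  by field.
have := final_num hm (r2_gt0 r0) ng.
have -> : 8 * h * (16 / r ^+ 2) = g / (8 * r ^+ 2) by rewrite /h; field; rewrite gt_eqF // r2_gt0.
have -> : 8 * h * 64 = g / 2 by rewrite /h; field.
move=> a b; lra.
Qed.
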